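(* Let $\Omega\subset\mathbb{R}^2$ be a domain, and let $p,q$ be real valued functions with $p\in C^2(\Omega)$ and $p>0$. Let $u_0\in C^2(\Omega)$ be a positive solution of $(\operatorname{div}p\operatorname{grad}+q)u=0$ in $\Omega$, and put $f=p^{1/2}u_0$. Let $W=W_1+iW_2\in C^2(\Omega)$ (with $W_1,W_2$ real valued) be a solution of $W_{\bar z}=\frac{f_{\bar z}}{f}\overline{W}$ in $\Omega$. Then: (i) $u=p^{-1/2}W_1$ is a solution of $(\operatorname{div}p\operatorname{grad}+q)u=0$ in $\Omega$; (ii) $v=p^{1/2}W_2$ is a solution of $(\operatorname{div}\frac1p\operatorname{grad}+q_1)v=0$ in $\Omega$, where $$q_1=-\frac1p\left(\frac qp+2\Big\langle\frac{\nabla p}{p},\frac{\nabla u_0}{u_0}\Big\rangle+2\Big(\frac{\nabla u_0}{u_0}\Big)^2\right).$$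
   Context: $\partial_{\bar z}=\frac12(\partial_x+i\partial_y)$. $\langle\cdot,\cdot\rangle$ is the Euclidean inner product in $\mathbb{R}^2$, and $(\nabla h)^2=h_x^2+h_y^2$. $(\operatorname{div}a\operatorname{grad}+b)\varphi=\operatorname{div}(a\nabla\varphi)+b\varphi$. *)

(* Defs.v *)
From Stdlib Require Import Reals.
From Coquelicot Require Import Coquelicot.
Open Scope R_scope.

(* functions on R^2 are written curried: f : R -> R -> R, f x y *)
Definition uncurry2 {A : Type} (f : R -> R -> A) : R * R -> A :=
  fun z => f (fst z) (snd z).

Definition dx (f : R -> R -> R) : R -> R -> R := fun x y => Derive (fun t => f t y) x.
Definition dy (f : R -> R -> R) : R -> R -> R := fun x y => Derive (fun t => f x t) y.

Definition is_domain (Om : R -> R -> Prop) : Prop :=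
  (exists x y, Om x y) /\
  open (uncurry2 Om) /\
  (forall U V : R * R -> Prop, open U -> open V ->
     (forall z, uncurry2 Om z -> U z \/ V z) ->
     (forall z, uncurry2 Om z -> U z -> V z -> False) ->
     (forall z, uncurry2 Om z -> ~ U z) \/ (forall z, uncurry2 Om z -> ~ V z)).

Definition C1_on (Om : R -> R -> Prop) (f : R -> R -> R) : Prop :=
  forall x y, Om x y ->
    ex_derive (fun t => f t y) x /\ ex_derive (fun t => f x t) y /\
    continuous (uncurry2 f) (x, y) /\
    continuous (uncurry2 (dx f)) (x, y) /\
    continuous (uncurry2 (dy f)) (x, y).

Definition C2_on (Om : R -> R -> Prop) (f : R -> R -> R) : Prop :=
  C1_on Om f /\ C1_on Om (dx f) /\ C1_on Om (dy f).

Definition divagrad (a b u : R -> R -> R) (x y : R) : R :=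
  dx (fun s t => a s t * dx u s t) x y + dy (fun s t => a s t * dy u s t) x y
  + b x y * u x y.

Definition is_solution (Om : R -> R -> Prop) (a b u : R -> R -> R) : Prop :=
  forall x y, Om x y ->
    ex_derive (fun t => u t y) x /\ ex_derive (fun t => u x t) y /\
    ex_derive (fun t => a t y * dx u t y) x /\
    ex_derive (fun t => a x t * dy u x t) y /\
    divagrad a b u x y = 0.

(* d/d zbar = 1/2 (d_x + i d_y) of a complex-valued function W = Re W + i Im W *)
Definition dbar (W : R -> R -> C) (x y : R) : C :=
  ((dx (fun s t => Re (W s t)) x y - dy (fun s t => Im (W s t)) x y) / 2,
   (dx (fun s t => Im (W s t)) x y + dy (fun s t => Re (W s t)) x y) / 2).

(* Main.v *)
Require Import Defs.
From Stdlib Require Import Reals Lra Psatz.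
From Coquelicot Require Import Coquelicot.
Open Scope R_scope.

Lemma loc2 Om x y : open (uncurry2 Om) -> Om x y -> locally_2d Om x y.
Proof. intros Ho H. apply locally_2d_locally. apply (Ho (x,y)). exact H. Qed.

Lemma locx Om x y : open (uncurry2 Om) -> Om x y -> locally x (fun s => Om s y).
Proof. intros Ho H. apply locally_2d_1d_const_y. apply loc2; auto. Qed.

Lemma locy Om x y : open (uncurry2 Om) -> Om x y -> locally y (fun t => Om x t).
Proof. intros Ho H. apply locally_2d_1d_const_x. apply loc2; auto. Qed.

Lemma sym2 Om g x y : open (uncurry2 Om) -> C2_on Om g -> Om x y ->
  dx (dy g) x y = dy (dx g) x y.
Proof.
intros Ho [H0 [H1 H2]] Hxy. unfold dx, dy.
apply Schwarz.
- apply locally_2d_impl with (P:=Om); [apply locally_2d_forall; intros u v Huv|apply loc2; auto].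
  destruct (H0 u v Huv) as (a&b&_). destruct (H1 u v Huv) as (c&d&_).
  destruct (H2 u v Huv) as (e&f&_).
  repeat split; auto.
- apply continuity_2d_pt_filterlim. destruct (H2 x y Hxy) as (_&_&_&c&_). exact c.
- apply continuity_2d_pt_filterlim. destruct (H1 x y Hxy) as (_&_&_&_&c). exact c.
Qed.

Lemma C2pt Om g x y : C2_on Om g -> Om x y ->
  ex_derive (fun t => g t y) x /\ ex_derive (fun t => g x t) y /\
  ex_derive (fun t => dx g t y) x /\ ex_derive (fun t => dx g x t) y /\
  ex_derive (fun t => dy g t y) x /\ ex_derive (fun t => dy g x t) y.
Proof.
intros [H0 [H1 H2]] Hxy.
destruct (H0 x y Hxy) as (a&b&_). destruct (H1 x y Hxy) as (c&d&_).
destruct (H2 x y Hxy) as (e&f&_). repeat split; auto.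
Qed.

Lemma Dx_ext (F G : R -> R -> R) x y :
  locally x (fun s => F s y = G s y) -> dx F x y = dx G x y.
Proof. intros H. unfold dx. apply Derive_ext_loc. exact H. Qed.
Lemma Dy_ext (F G : R -> R -> R) x y :
  locally y (fun t => F x t = G x t) -> dy F x y = dy G x y.
Proof. intros H. unfold dy. apply Derive_ext_loc. exact H. Qed.
Lemma Dx_is (F : R -> R -> R) x y l :
  is_derive (fun s => F s y) x l -> dx F x y = l.
Proof. intros H. unfold dx. apply is_derive_unique. exact H. Qed.
Lemma Dy_is (F : R -> R -> R) x y l :
  is_derive (fun t => F x t) y l -> dy F x y = l.
Proof. intros H. unfold dy. apply is_derive_unique. exact H. Qed.
Lemma solve_b a b c : a + b * c = 0 -> c <> 0 -> b = - a / c.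
Proof. intros H Hc. field_simplify; auto. apply (Rmult_eq_reg_r c); [|auto].
 unfold Rdiv. rewrite Rmult_assoc, Rinv_l; lra. Qed.
Ltac nz := match goal with |- ?a * ?b <> 0 => apply Rmult_integral_contrapositive_currified; nz | _ => (intro; lra) end.
Ltac side := repeat split; try assumption; try nz.
Lemma Erel (p u0 : R -> R -> R) (W : R -> R -> C) x y :
  0 < p x y -> 0 < u0 x y ->
  ex_derive (fun t => p t y) x -> ex_derive (fun t => p x t) y ->
  ex_derive (fun t => u0 t y) x -> ex_derive (fun t => u0 x t) y ->
  dbar W x y = Cmult (Cdiv (dbar (fun s t => RtoC (sqrt (p s t) * u0 s t)) x y)
                           (RtoC (sqrt (p x y) * u0 x y))) (Cconj (W x y)) ->
  dx (fun s t => Re (W s t)) x y = dy (fun s t => Im (W s t)) x y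
     + (dx p x y / (2 * p x y) + dx u0 x y / u0 x y) * Re (W x y)
     + (dy p x y / (2 * p x y) + dy u0 x y / u0 x y) * Im (W x y) /\
  dy (fun s t => Re (W s t)) x y =
       (dy p x y / (2 * p x y) + dy u0 x y / u0 x y) * Re (W x y)
     - (dx p x y / (2 * p x y) + dx u0 x y / u0 x y) * Im (W x y)
     - dx (fun s t => Im (W s t)) x y.
Proof.
intros hp hu e1 e2 e3 e4 H.
assert (hs : 0 < sqrt (p x y)) by (apply sqrt_lt_R0; exact hp).
assert (Fx : dx (fun s t => Re (RtoC (sqrt (p s t) * u0 s t))) x y =
   dx p x y / (2 * sqrt (p x y)) * u0 x y + sqrt (p x y) * dx u0 x y).
{ unfold dx; simpl. apply is_derive_unique. auto_derive.
  - repeat split; auto.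
  - field. lra. }
assert (Fy : dy (fun s t => Re (RtoC (sqrt (p s t) * u0 s t))) x y =
   dy p x y / (2 * sqrt (p x y)) * u0 x y + sqrt (p x y) * dy u0 x y).
{ unfold dy; simpl. apply is_derive_unique. auto_derive.
  - repeat split; auto.
  - field. lra. }
assert (Gx : dx (fun s t => Im (RtoC (sqrt (p s t) * u0 s t))) x y = 0).
{ unfold dx; simpl. apply Derive_const. }
assert (Gy : dy (fun s t => Im (RtoC (sqrt (p s t) * u0 s t))) x y = 0).
{ unfold dy; simpl. apply Derive_const. }
unfold dbar in H. rewrite Fx, Fy, Gx, Gy in H.
set (s := sqrt (p x y)) in *.
assert (Hps : p x y = s * s) by (unfold s; rewrite sqrt_sqrt; lra).
clearbody s. rewrite Hps.
set (w1 := Re (W x y)) in *. set (w2 := Im (W x y)) in *.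
assert (HW : W x y = (w1, w2)) by (unfold w1, w2; destruct (W x y); reflexivity).
rewrite HW in H.
set (a1 := dx (fun s t => Re (W s t)) x y) in *.
set (a2 := dy (fun s t => Im (W s t)) x y) in *.
set (b1 := dy (fun s t => Re (W s t)) x y) in *.
set (b2 := dx (fun s t => Im (W s t)) x y) in *.
set (px := dx p x y) in *. set (py := dy p x y) in *.
set (ux := dx u0 x y) in *. set (uy := dy u0 x y) in *.
set (U := u0 x y) in *.
clearbody w1 w2 a1 a2 b1 b2 px py ux uy U.
injection H; clear H; intros H2 H1.
unfold Cmult, Cdiv, Cinv, Cconj, RtoC in *; simpl in H1, H2.
assert (s <> 0) by lra. assert (U <> 0) by lra.
split.
- match type of H1 with _ = ?E => replace a1 with (a2 + 2 * E) by lra end.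
  field. auto.
- match type of H2 with _ = ?E => replace b1 with (2 * E - b2) by lra end.
  field. auto.
Qed.
Lemma part1 Om p q u0 W1 W2 :
  open (uncurry2 Om) -> C2_on Om p -> (forall x y, Om x y -> 0 < p x y) ->
  C2_on Om u0 -> (forall x y, Om x y -> 0 < u0 x y) -> is_solution Om p q u0 ->
  C2_on Om W1 -> C2_on Om W2 ->
  (forall s t, Om s t -> dx W1 s t = dy W2 s t
     + (dx p s t / (2 * p s t) + dx u0 s t / u0 s t) * W1 s t
     + (dy p s t / (2 * p s t) + dy u0 s t / u0 s t) * W2 s t) ->
  (forall s t, Om s t -> dy W1 s t =
       (dy p s t / (2 * p s t) + dy u0 s t / u0 s t) * W1 s t
     - (dx p s t / (2 * p s t) + dx u0 s t / u0 s t) * W2 s t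
     - dx W2 s t) ->
  is_solution Om p q (fun x y => / sqrt (p x y) * W1 x y).
Proof.
intros Ho Cp pp Cu up Su CW1 CW2 E1 E2.
assert (dux : forall s t, Om s t -> dx (fun x y => / sqrt (p x y) * W1 x y) s t =
   dx W1 s t / sqrt (p s t) - dx p s t * W1 s t / (2 * (sqrt (p s t) * sqrt (p s t) * sqrt (p s t)))).
{ intros s t Hst. destruct (C2pt _ _ _ _ Cp Hst) as (a1&a2&a3&a4&a5&a6).
  destruct (C2pt _ _ _ _ CW1 Hst) as (b1&b2&b3&b4&b5&b6).
  assert (h := pp s t Hst). assert (hs : 0 < sqrt (p s t)) by (apply sqrt_lt_R0; auto).
  apply Dx_is. auto_derive; [side|]. unfold dx. field. lra. }
assert (duy : forall s t, Om s t -> dy (fun x y => / sqrt (p x y) * W1 x y) s t =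
   dy W1 s t / sqrt (p s t) - dy p s t * W1 s t / (2 * (sqrt (p s t) * sqrt (p s t) * sqrt (p s t)))).
{ intros s t Hst. destruct (C2pt _ _ _ _ Cp Hst) as (a1&a2&a3&a4&a5&a6).
  destruct (C2pt _ _ _ _ CW1 Hst) as (b1&b2&b3&b4&b5&b6).
  assert (h := pp s t Hst). assert (hs : 0 < sqrt (p s t)) by (apply sqrt_lt_R0; auto).
  apply Dy_is. auto_derive; [side|]. unfold dy. field. lra. }
intros x y Hxy.
destruct (C2pt _ _ _ _ Cp Hxy) as (a1&a2&a3&a4&a5&a6).
destruct (C2pt _ _ _ _ Cu Hxy) as (c1&c2&c3&c4&c5&c6).
destruct (C2pt _ _ _ _ CW1 Hxy) as (b1&b2&b3&b4&b5&b6).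
destruct (C2pt _ _ _ _ CW2 Hxy) as (d1&d2&d3&d4&d5&d6).
assert (h := pp x y Hxy). assert (hs : 0 < sqrt (p x y)) by (apply sqrt_lt_R0; auto).
assert (hu := up x y Hxy).
assert (LX : locally x (fun s => p s y * dx W1 s y / sqrt (p s y) - p s y * dx p s y * W1 s y / (2 * (sqrt (p s y) * sqrt (p s y) * sqrt (p s y)))
   = p s y * dx (fun x y => / sqrt (p x y) * W1 x y) s y)).
{ apply filter_imp with (2 := locx _ _ _ Ho Hxy). intros s Hs. rewrite (dux s y Hs). match goal with |- ?a = ?b => change (@eq R a b) end; unfold Rdiv; ring. }
assert (LY : locally y (fun t => p x t * dy W1 x t / sqrt (p x t) - p x t * dy p x t * W1 x t / (2 * (sqrt (p x t) * sqrt (p x t) * sqrt (p x t)))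
   = p x t * dy (fun x y => / sqrt (p x y) * W1 x y) x t)).
{ apply filter_imp with (2 := locy _ _ _ Ho Hxy). intros t Ht. rewrite (duy x t Ht). match goal with |- ?a = ?b => change (@eq R a b) end; unfold Rdiv; ring. }
split; [|split; [|split; [|split]]].
- auto_derive; side.
- auto_derive; side.
- apply (ex_derive_ext_loc _ _ _ LX). auto_derive; side.
- apply (ex_derive_ext_loc _ _ _ LY). auto_derive; side.
- unfold divagrad.
  rewrite (Dx_ext _ (fun s t => p s t * dx W1 s t / sqrt (p s t) - p s t * dx p s t * W1 s t / (2 * (sqrt (p s t) * sqrt (p s t) * sqrt (p s t))))).
  2:{ apply filter_imp with (2 := LX). intros s Hs. symmetry. exact Hs. }
  rewrite (Dy_ext _ (fun s t => p s t * dy W1 s t / sqrt (p s t) - p s t * dy p s t * W1 s t / (2 * (sqrt (p s t) * sqrt (p s t) * sqrt (p s t))))).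
  2:{ apply filter_imp with (2 := LY). intros s Hs. symmetry. exact Hs. }
  erewrite Dx_is by (auto_derive; [side|reflexivity]).
  erewrite Dy_is by (auto_derive; [side|reflexivity]).
  eassert (E1x : dx (dx W1) x y = _).
  { rewrite (Dx_ext (dx W1) (fun s t => dy W2 s t
     + (dx p s t / (2 * p s t) + dx u0 s t / u0 s t) * W1 s t
     + (dy p s t / (2 * p s t) + dy u0 s t / u0 s t) * W2 s t)).
    - apply Dx_is. auto_derive; [side|reflexivity].
    - apply filter_imp with (2 := locx _ _ _ Ho Hxy). intros s Hs. apply E1; auto. }
  eassert (E2y : dy (dy W1) x y = _).
  { rewrite (Dy_ext (dy W1) (fun s t => 
       (dy p s t / (2 * p s t) + dy u0 s t / u0 s t) * W1 s t
     - (dx p s t / (2 * p s t) + dx u0 s t / u0 s t) * W2 s t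
     - dx W2 s t)).
    - apply Dy_is. auto_derive; [side|reflexivity].
    - apply filter_imp with (2 := locy _ _ _ Ho Hxy). intros s Hs. apply E2; auto. }
  destruct (Su x y Hxy) as (_&_&_&_&R0). unfold divagrad in R0.
  erewrite Dx_is in R0 by (auto_derive; [side|reflexivity]).
  erewrite Dy_is in R0 by (auto_derive; [side|reflexivity]).
  apply solve_b in R0; [|lra].
  assert (S1 := sym2 _ _ _ _ Ho CW2 Hxy).
  assert (S2 := sym2 _ _ _ _ Ho Cp Hxy).
  assert (S3 := sym2 _ _ _ _ Ho Cu Hxy).
  assert (F1 := E1 x y Hxy). assert (F2 := E2 x y Hxy).
  clear LX LY dux duy.
  unfold dx, dy in *.
  rewrite E1x, E2y. rewrite F1, F2. rewrite S1, S2, S3. rewrite R0.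
  set (s := sqrt (p x y)) in hs |- *.
  assert (Hps : p x y = s*s) by (unfold s; rewrite sqrt_sqrt; lra).
  clearbody s. rewrite Hps. field. split; lra.
Qed.
Lemma part2 Om p q u0 W1 W2 :
  open (uncurry2 Om) -> C2_on Om p -> (forall x y, Om x y -> 0 < p x y) ->
  C2_on Om u0 -> (forall x y, Om x y -> 0 < u0 x y) -> is_solution Om p q u0 ->
  C2_on Om W1 -> C2_on Om W2 ->
  (forall s t, Om s t -> dx W1 s t = dy W2 s t
     + (dx p s t / (2 * p s t) + dx u0 s t / u0 s t) * W1 s t
     + (dy p s t / (2 * p s t) + dy u0 s t / u0 s t) * W2 s t) ->
  (forall s t, Om s t -> dy W1 s t =
       (dy p s t / (2 * p s t) + dy u0 s t / u0 s t) * W1 s t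
     - (dx p s t / (2 * p s t) + dx u0 s t / u0 s t) * W2 s t
     - dx W2 s t) ->
  is_solution Om (fun x y => / p x y)
    (fun x y =>
       - (/ p x y) *
         (q x y / p x y
          + 2 * (dx p x y / p x y * (dx u0 x y / u0 x y)
                 + dy p x y / p x y * (dy u0 x y / u0 x y))
          + 2 * ((dx u0 x y / u0 x y) ^ 2 + (dy u0 x y / u0 x y) ^ 2)))
    (fun x y => sqrt (p x y) * W2 x y).
Proof.
intros Ho Cp pp Cu up Su CW1 CW2 E1 E2.
assert (dux : forall s t, Om s t -> dx (fun x y => sqrt (p x y) * W2 x y) s t =
   dx p s t * W2 s t / (2 * sqrt (p s t)) + sqrt (p s t) * dx W2 s t).
{ intros s t Hst. destruct (C2pt _ _ _ _ Cp Hst) as (a1&a2&a3&a4&a5&a6).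
  destruct (C2pt _ _ _ _ CW2 Hst) as (b1&b2&b3&b4&b5&b6).
  assert (h := pp s t Hst). assert (hs : 0 < sqrt (p s t)) by (apply sqrt_lt_R0; auto).
  apply Dx_is. auto_derive; [side|]. unfold dx. field. lra. }
assert (duy : forall s t, Om s t -> dy (fun x y => sqrt (p x y) * W2 x y) s t =
   dy p s t * W2 s t / (2 * sqrt (p s t)) + sqrt (p s t) * dy W2 s t).
{ intros s t Hst. destruct (C2pt _ _ _ _ Cp Hst) as (a1&a2&a3&a4&a5&a6).
  destruct (C2pt _ _ _ _ CW2 Hst) as (b1&b2&b3&b4&b5&b6).
  assert (h := pp s t Hst). assert (hs : 0 < sqrt (p s t)) by (apply sqrt_lt_R0; auto).
  apply Dy_is. auto_derive; [side|]. unfold dy. field. lra. }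
intros x y Hxy.
destruct (C2pt _ _ _ _ Cp Hxy) as (a1&a2&a3&a4&a5&a6).
destruct (C2pt _ _ _ _ Cu Hxy) as (c1&c2&c3&c4&c5&c6).
destruct (C2pt _ _ _ _ CW1 Hxy) as (b1&b2&b3&b4&b5&b6).
destruct (C2pt _ _ _ _ CW2 Hxy) as (d1&d2&d3&d4&d5&d6).
assert (h := pp x y Hxy). assert (hs : 0 < sqrt (p x y)) by (apply sqrt_lt_R0; auto).
assert (hu := up x y Hxy).
assert (LX : locally x (fun s => / p s y * (dx p s y * W2 s y / (2 * sqrt (p s y)) + sqrt (p s y) * dx W2 s y)
   = / p s y * dx (fun x y => sqrt (p x y) * W2 x y) s y)).
{ apply filter_imp with (2 := locx _ _ _ Ho Hxy). intros s Hs. rewrite (dux s y Hs). reflexivity. }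
assert (LY : locally y (fun t => / p x t * (dy p x t * W2 x t / (2 * sqrt (p x t)) + sqrt (p x t) * dy W2 x t)
   = / p x t * dy (fun x y => sqrt (p x y) * W2 x y) x t)).
{ apply filter_imp with (2 := locy _ _ _ Ho Hxy). intros t Ht. rewrite (duy x t Ht). reflexivity. }
split; [|split; [|split; [|split]]].
- auto_derive; side.
- auto_derive; side.
- apply (ex_derive_ext_loc _ _ _ LX). auto_derive; side.
- apply (ex_derive_ext_loc _ _ _ LY). auto_derive; side.
- unfold divagrad.
  rewrite (Dx_ext _ (fun s t => / p s t * (dx p s t * W2 s t / (2 * sqrt (p s t)) + sqrt (p s t) * dx W2 s t))).
  2:{ apply filter_imp with (2 := LX). intros s Hs. symmetry. exact Hs. }
  rewrite (Dy_ext _ (fun s t => / p s t * (dy p s t * W2 s t / (2 * sqrt (p s t)) + sqrt (p s t) * dy W2 s t))).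
  2:{ apply filter_imp with (2 := LY). intros s Hs. symmetry. exact Hs. }
  erewrite Dx_is by (auto_derive; [side|reflexivity]).
  erewrite Dy_is by (auto_derive; [side|reflexivity]).
  eassert (E2x : dx (dx W2) x y = _).
  { rewrite (Dx_ext (dx W2) (fun s t =>
       (dy p s t / (2 * p s t) + dy u0 s t / u0 s t) * W1 s t
     - (dx p s t / (2 * p s t) + dx u0 s t / u0 s t) * W2 s t
     - dy W1 s t)).
    - apply Dx_is. auto_derive; [side|reflexivity].
    - apply filter_imp with (2 := locx _ _ _ Ho Hxy). intros s Hs.
      assert (K := E2 s y Hs). match goal with |- ?a = ?b => change (@eq R a b) end. lra. }
  eassert (E1y : dy (dy W2) x y = _).
  { rewrite (Dy_ext (dy W2) (fun s t => dx W1 s t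
     - (dx p s t / (2 * p s t) + dx u0 s t / u0 s t) * W1 s t
     - (dy p s t / (2 * p s t) + dy u0 s t / u0 s t) * W2 s t)).
    - apply Dy_is. auto_derive; [side|reflexivity].
    - apply filter_imp with (2 := locy _ _ _ Ho Hxy). intros s Hs.
      assert (K := E1 x s Hs). match goal with |- ?a = ?b => change (@eq R a b) end. lra. }
  destruct (Su x y Hxy) as (_&_&_&_&R0). unfold divagrad in R0.
  erewrite Dx_is in R0 by (auto_derive; [side|reflexivity]).
  erewrite Dy_is in R0 by (auto_derive; [side|reflexivity]).
  apply solve_b in R0; [|lra].
  assert (S1 := sym2 _ _ _ _ Ho CW1 Hxy).
  assert (S2 := sym2 _ _ _ _ Ho Cp Hxy).
  assert (S3 := sym2 _ _ _ _ Ho Cu Hxy).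
  assert (F1 := E1 x y Hxy). assert (F2 := E2 x y Hxy).
  assert (G2 : dx W2 x y = (dy p x y / (2 * p x y) + dy u0 x y / u0 x y) * W1 x y
     - (dx p x y / (2 * p x y) + dx u0 x y / u0 x y) * W2 x y - dy W1 x y) by lra.
  assert (G1 : dy W2 x y = dx W1 x y
     - (dx p x y / (2 * p x y) + dx u0 x y / u0 x y) * W1 x y
     - (dy p x y / (2 * p x y) + dy u0 x y / u0 x y) * W2 x y) by lra.
  clear LX LY dux duy F1 F2.
  cbv beta.
  unfold dx, dy in *.
  rewrite E2x, E1y. rewrite G1, G2. rewrite S1, S2, S3. rewrite R0.
  set (s := sqrt (p x y)) in hs |- *.
  assert (Hps : p x y = s*s) by (unfold s; rewrite sqrt_sqrt; lra).
  clearbody s. rewrite Hps. field. repeat split; lra.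
Qed.

Theorem mainTheorem7 (Om : R -> R -> Prop) (p q u0 : R -> R -> R) (W : R -> R -> C) :
  is_domain Om ->
  C2_on Om p ->
  (forall x y, Om x y -> 0 < p x y) ->
  C2_on Om u0 ->
  (forall x y, Om x y -> 0 < u0 x y) ->
  is_solution Om p q u0 ->
  C2_on Om (fun x y => Re (W x y)) ->
  C2_on Om (fun x y => Im (W x y)) ->
  (let f := fun x y => sqrt (p x y) * u0 x y in
   forall x y, Om x y ->
     dbar W x y =
     Cmult (Cdiv (dbar (fun s t => RtoC (f s t)) x y) (RtoC (f x y))) (Cconj (W x y))) ->
  is_solution Om p q (fun x y => / sqrt (p x y) * Re (W x y)) /\
  is_solution Om (fun x y => / p x y)
    (fun x y =>
       - (/ p x y) *
         (q x y / p x y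
          + 2 * (dx p x y / p x y * (dx u0 x y / u0 x y)
                 + dy p x y / p x y * (dy u0 x y / u0 x y))
          + 2 * ((dx u0 x y / u0 x y) ^ 2 + (dy u0 x y / u0 x y) ^ 2)))
    (fun x y => sqrt (p x y) * Im (W x y)).
Proof.
intros [_ [Ho _]] Cp pp Cu up Su CW1 CW2 Hd.
cbv beta zeta in Hd.
assert (EE : forall s t, Om s t ->
  dx (fun s t => Re (W s t)) s t = dy (fun s t => Im (W s t)) s t
     + (dx p s t / (2 * p s t) + dx u0 s t / u0 s t) * Re (W s t)
     + (dy p s t / (2 * p s t) + dy u0 s t / u0 s t) * Im (W s t) /\
  dy (fun s t => Re (W s t)) s t =
       (dy p s t / (2 * p s t) + dy u0 s t / u0 s t) * Re (W s t)
     - (dx p s t / (2 * p s t) + dx u0 s t / u0 s t) * Im (W s t)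
     - dx (fun s t => Im (W s t)) s t).
{ intros s t Hst.
  destruct (C2pt _ _ _ _ Cp Hst) as (a1&a2&_).
  destruct (C2pt _ _ _ _ Cu Hst) as (c1&c2&_).
  apply Erel; auto. }
split.
- apply (part1 Om p q u0 (fun s t => Re (W s t)) (fun s t => Im (W s t))); auto.
  + intros s t H. exact (proj1 (EE s t H)).
  + intros s t H. exact (proj2 (EE s t H)).
- apply (part2 Om p q u0 (fun s t => Re (W s t)) (fun s t => Im (W s t))); auto.
  + intros s t H. exact (proj1 (EE s t H)).
  + intros s t H. exact (proj2 (EE s t H)).
Qed.
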